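(* The substring complexity $\delta$ satisfies the following upper bounds on its sensitivity: substitutions: $\mathsf{MS}_{\mathrm{sub}}(\delta,n) \leq 2$ and $\mathsf{AS}_{\mathrm{sub}}(\delta,n) \leq 1$; insertions: $\mathsf{MS}_{\mathrm{ins}}(\delta,n) \leq 2$ and $\mathsf{AS}_{\mathrm{ins}}(\delta,n) \leq 1$; deletions: $\limsup_{n\to\infty}\mathsf{MS}_{\mathrm{del}}(\delta,n) \leq 1.5$ and $\limsup_{n\to\infty}\mathsf{AS}_{\mathrm{del}}(\delta,n) \leq 1$.
   Context: Strings are finite sequences over an alphabet $\Sigma$; $\Sigma^n$ is the set of strings of length $n$. $\mathsf{ed}(T,S)$ is the edit distance (minimum number of single-character substitutions, insertions, deletions turning $T$ into $S$). For a measure $C$ assigning a number $C(T)$ to each string, define $\mathsf{MS}_{\mathrm{sub}}(C,n)=\max_{T\in\Sigma^n}\{C(T')/C(T): T'\in\Sigma^n,\ \mathsf{ed}(T,T')=1\}$, $\mathsf{MS}_{\mathrm{ins}}(C,n)$ and $\mathsf{MS}_{\mathrm{del}}(C,n)$ the same with $T'\in\Sigma^{n+1}$, resp. $T'\in\Sigma^{n-1}$; and $\mathsf{AS}_{\mathrm{sub}},\mathsf{AS}_{\mathrm{ins}},\mathsf{AS}_{\mathrm{del}}$ the same with $C(T')-C(T)$ in place of $C(T')/C(T)$. For a string $T$ of length $n$, $\mathsf{Substr}(T,k)$ is the number of distinct substrings of length $k$ of $T$, and the substring complexity is $\delta(T)=\max_{1\le k\le n}\mathsf{Substr}(T,k)/k$.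 *)

(* Defs.v *)
From HB Require Import structures.
From mathcomp Require Import all_boot all_order all_algebra.
From mathcomp Require Import all_classical all_reals ereal sequences.
Set Implicit Arguments. Unset Strict Implicit. Unset Printing Implicit Defensive.
Import Order.TTheory GRing.Theory Num.Theory.

Section StringDefs.
Variable Sigma : eqType.

Fixpoint ed (s t : seq Sigma) {struct s} : nat :=
  match s with
  | [::] => size t
  | a :: s' =>
    let fix aux (t : seq Sigma) : nat :=
      match t with
      | [::] => size s
      | b :: t' => minn (minn (ed s' t' + (a != b)) (ed s' t).+1) (aux t').+1
      end in aux t
  end.

Definition Substr (T : seq Sigma) (k : nat) : nat :=
  size (undup [seq take k (drop i T) | i <- iota 0 (size T - k).+1]).

Variable R : realType.
Local Open Scope ring_scope.

Definition delta (T : seq Sigma) : R :=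
  \big[Num.max/0]_(1 <= k < (size T).+1) ((Substr T k)%:R / k%:R).

Local Open Scope ereal_scope.
Local Open Scope classical_set_scope.

Definition MS (C : seq Sigma -> R) (n m : nat) : \bar R :=
  ereal_sup [set x | exists T T' : seq Sigma,
     [/\ size T = n, size T' = m, ed T T' = 1%N & x = (C T' / C T)%:E]].
Definition AS (C : seq Sigma -> R) (n m : nat) : \bar R :=
  ereal_sup [set x | exists T T' : seq Sigma,
     [/\ size T = n, size T' = m, ed T T' = 1%N & x = (C T' - C T)%:E]].

Definition MS_sub C n := MS C n n.
Definition MS_ins C n := MS C n n.+1.
Definition MS_del C n := MS C n n.-1.
Definition AS_sub C n := AS C n n.
Definition AS_ins C n := AS C n n.+1.
Definition AS_del C n := AS C n n.-1.
End StringDefs.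

(* Main.v *)
Require Import Defs.
From HB Require Import structures.
From mathcomp Require Import all_boot all_order all_algebra.
From mathcomp Require Import all_classical all_reals ereal sequences.
From mathcomp Require Import zify ring lra topology normedtype.
Import Order.TTheory GRing.Theory Num.Theory.

Section Comb.
Variable Sigma : eqType.
Implicit Types s t u v x y : seq Sigma.

Lemma ed_cons a s b t : ed (a :: s) (b :: t) =
  minn (minn (ed s t + (a != b)) (ed s (b :: t)).+1) (ed (a :: s) t).+1.
Proof. by []. Qed.

Lemma ed_nil_r s : ed s [::] = size s.
Proof. by case: s. Qed.

Lemma ed0 s t : ed s t = 0 -> s = t.
Proof.
elim: s t => [|a s IH] [|b t] //. all: try by [].
move=> h; have {h}: ed (a :: s) (b :: t) = 0 by [].
rewrite ed_cons => h.
have h1 : ed s t + (a != b) = 0 by move: h; lia.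
have -> : a = b by apply/eqP; move: h1; case: (a == b) => //=; lia.
by rewrite (IH t) //; lia.
Qed.

Lemma ed1 s t : ed s t <= 1 -> exists u x y v,
  [/\ s = u ++ x ++ v, t = u ++ y ++ v, size x <= 1 & size y <= 1].
Proof.
elim: s t => [|a s IH] [|b t].
- by move=> _; exists [::], [::], [::], [::].
- move=> /= h; exists [::], [::], (b :: t), [::]; rewrite /= cats0; split => //.
- move=> h; have {h} : (size s).+1 <= 1 by []. move=> h; exists [::], [:: a], [::], s.
  by case: s {IH} h => //.
- move=> h; have {h}: ed (a :: s) (b :: t) <= 1 by [].
  rewrite ed_cons => h.
  case E1: (ed s t + (a != b) <= 1).
  + case Eab: (a == b).
    * move/eqP: Eab E1 => <- E1.
      have := IH t; case.
        by move: E1; rewrite eqxx /=; lia.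
      move=> u [x [y [v [-> -> hx hy]]]].
      by exists (a :: u), x, y, v.
    * have : ed s t = 0 by move: E1; rewrite Eab /=; lia.
      move/ed0 => ->; exists [::], [:: a], [:: b], t; split => //.
  + case E2: (ed s (b :: t) == 0).
    * move/eqP/ed0: E2 => ->; exists [::], [:: a], [::], (b :: t); split => //.
    * case E3: (ed (a :: s) t == 0).
      - move/eqP/ed0: E3 => <-; exists [::], [::], [:: b], (a :: s); split => //.
      - exfalso; move: h E1 E2 E3; lia.
Qed.

Lemma take_drop_catl s t i k : i + k <= size s ->
  take k (drop i (s ++ t)) = take k (drop i s).
Proof.
move=> h; rewrite drop_cat; case: ifP => hi.
  rewrite take_cat size_drop; case: ifP => // hk.
  have -> : k - (size s - i) = 0 by lia.
  rewrite take0 cats0 take_oversize // size_drop; lia.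
have -> : k = 0 by lia.
by rewrite !take0.
Qed.

Lemma drop_cat_size s t j : drop (size s + j) (s ++ t) = drop j t.
Proof. by rewrite drop_cat ltnNge leq_addr /= addKn. Qed.

Definition wins (T : seq Sigma) k := [seq take k (drop i T) | i <- iota 0 (size T - k).+1].

Lemma uniq_sub_size (s1 s2 s3 : seq (seq Sigma)) :
  {subset s1 <= s2 ++ s3} -> size (undup s1) <= size (undup s2) + size s3.
Proof.
move=> h.
have : size (undup s1) <= size (undup s2 ++ s3).
  apply: uniq_leq_size; first exact: undup_uniq.
  move=> w; rewrite mem_undup => /h; rewrite !mem_cat mem_undup //.
by rewrite size_cat.
Qed.

Lemma substr_edit u x y v k : size y <= 1 -> 0 < k ->
  Substr (u ++ y ++ v) k <= Substr (u ++ x ++ v) k + k.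
Proof.
move=> hy hk.
set T := u ++ x ++ v; set T' := u ++ y ++ v.
have sT : size T = size u + size x + size v by rewrite /T !size_cat addnA.
have sT' : size T' = size u + size y + size v by rewrite /T' !size_cat addnA.
case: (leqP k (size T')) => hkT; last first.
  rewrite /Substr; apply: leq_trans (size_undup _) _.
  rewrite size_map size_iota; have -> : size T' - k = 0 by lia.
  lia.
rewrite /Substr.
apply: leq_trans (@uniq_sub_size _ _ [seq take k (drop i T') | i <- iota ((size u).+1 - k) k] _) _; last first.
  by rewrite size_map size_iota.
move=> w /mapP [i]; rewrite mem_iota => /andP[_ hi] ->; rewrite mem_cat.
case: (leqP (i + k) (size u)) => h1.
  apply/orP; left; apply/mapP; exists i; first by rewrite mem_iota; lia.
  by rewrite /T /T' !take_drop_catl.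
case: (leqP (size u + size y) i) => h2.
  apply/orP; left; apply/mapP; exists (size u + (size x + (i - size u - size y))).
    by rewrite mem_iota; lia.
  have ei : i = size u + (size y + (i - size u - size y)) by lia.
  by rewrite {1}ei /T /T' !drop_cat_size.
apply/orP; right; apply/mapP; exists i => //; rewrite mem_iota; lia.
Qed.
End Comb.
Local Open Scope ring_scope.
Section Real.
Variable Sigma : eqType.
Variable R : realType.
Implicit Types T : seq Sigma.

Lemma delta_ge0 T : 0 <= delta R T.
Proof.
rewrite /delta; elim/big_ind: _ => //.
by move=> x y hx hy; rewrite le_max hx.
Qed.

Lemma delta_ge T k : (1 <= k <= size T)%N -> (Substr T k)%:R / k%:R <= delta R T.
Proof.
move=> hk; rewrite /delta; apply: (@le_bigmax_seq _ _ _ _ _ k) => //.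
by rewrite mem_index_iota; lia.
Qed.

Lemma delta_le T (c : R) : 0 <= c ->
  (forall k, (1 <= k <= size T)%N -> (Substr T k)%:R / k%:R <= c) -> delta R T <= c.
Proof.
move=> c0 h; rewrite /delta big_seq_cond; apply: bigmax_le => // k /andP[hk _].
by apply: h; move: hk; rewrite mem_index_iota.
Qed.

Lemma Substr_ge1 T k : (1 <= Substr T k)%N.
Proof.
rewrite /Substr.
have : take k (drop 0 T) \in undup [seq take k (drop i T) | i <- iota 0 (size T - k).+1].
  by rewrite mem_undup; apply/mapP; exists 0 => //; rewrite mem_iota.
by case: (undup _).
Qed.

Lemma delta_ge1 T : T != [::] -> 1 <= delta R T.
Proof.
move=> hT; have h1 : (1 <= 1 <= size T)%N by case: T hT.
apply: (@le_trans _ _ _ _ _ _ (delta_ge T 1 h1)).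
by rewrite divr1 ler1n Substr_ge1.
Qed.

Lemma delta_nil : delta R ([::] : seq Sigma) = 0.
Proof. by rewrite /delta big_geq. Qed.

Lemma wins1 T a : a \in T -> [:: a] \in [seq take 1 (drop i T) | i <- iota 0 (size T - 1).+1].
Proof.
move=> aT; apply/mapP; exists (index a T).
  rewrite -index_mem in aT; rewrite mem_iota /=; lia.
by rewrite (drop_nth a) ?index_mem // nth_index // /= take0.
Qed.

Lemma delta_ge2 T a b : a \in T -> b \in T -> a != b -> 2 <= delta R T.
Proof.
move=> aT bT ab; have h1 : (1 <= 1 <= size T)%N by case: T aT {bT}.
apply: (@le_trans _ _ _ _ _ _ (delta_ge T 1 h1)).
rewrite divr1 ler_nat /Substr.
have -> : 2%N = size [:: [:: a]; [:: b]] by [].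
apply: uniq_leq_size; first by rewrite /= inE andbT; apply: contra ab => /eqP [->].
by move=> w; rewrite !inE mem_undup => /orP[] /eqP ->; apply: wins1.
Qed.

Lemma delta_unary T a : all (pred1 a) T -> delta R T <= 1.
Proof.
move=> hT; apply: delta_le => // k /andP[k1 kT].
rewrite ler_pdivrMr ?ltr0n // mul1r ler_nat.
apply: (@leq_trans (size [:: nseq k a])) => //.
apply: uniq_leq_size; first exact: undup_uniq.
move=> w; rewrite mem_undup => /mapP [i]; rewrite mem_iota => /andP[_ hi] ->; rewrite inE.
have hw : all (pred1 a) (take k (drop i T)).
  by apply/allP => z /mem_take /mem_drop; apply/allP.
move/all_pred1P: hw => ->; rewrite size_take size_drop.
by case: ifP => // h; apply/eqP; congr nseq; lia.
Qed.


Lemma delta_edit (u x y v : seq Sigma) : (size y <= 1)%N ->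
  delta R (u ++ y ++ v) <= delta R (u ++ x ++ v) + 1.
Proof.
move=> hy; apply: delta_le; first by rewrite addr_ge0 // delta_ge0.
move=> k /andP[k1 kT].
have hS := @substr_edit Sigma u x y v k hy k1.
have hS' : (Substr (u ++ y ++ v) k)%:R <= (Substr (u ++ x ++ v) k)%:R + k%:R :> R.
  by rewrite -natrD ler_nat.
have k0 : (0 : R) < k%:R by rewrite ltr0n.
have k1' : (1 : R) <= k%:R by rewrite ler1n.
have d0 := delta_ge0 (u ++ x ++ v).
rewrite ler_pdivrMr //.
case: (leqP k (size (u ++ x ++ v))) => hk.
  have hd := delta_ge (u ++ x ++ v) k (introT andP (conj k1 hk)).
  rewrite ler_pdivrMr // in hd.
  lra.
have h1 : (Substr (u ++ y ++ v) k <= 1)%N.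
  rewrite /Substr; apply: leq_trans (size_undup _) _.
  rewrite size_map size_iota.
  move: hk kT hy; rewrite !size_cat; lia.
have h1' : (Substr (u ++ y ++ v) k)%:R <= 1 :> R by rewrite -(ler_nat R) in h1.
nra.
Qed.

End Real.
Local Open Scope ereal_scope.
Local Open Scope classical_set_scope.

Lemma limsup_le (R : realType) (u : (\bar R)^nat) (c : \bar R) :
  (forall n, u n <= c) -> limn_esup u <= c.
Proof.
move=> h; rewrite limn_esup_lim; apply: lime_le; first exact: is_cvg_esups.
apply: nearW => m; apply: ge_ereal_sup => _ [k _ <-]; exact: h.
Qed.

Lemma MS_le (R : realType) (Sigma : eqType) (C : seq Sigma -> R) n m (c : R) :
  (forall T T', size T = n -> size T' = m -> ed T T' = 1%N -> (C T' / C T <= c)%R) ->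
  MS C n m <= c%:E.
Proof.
move=> h; apply: ge_ereal_sup => _ [T [T' [h1 h2 h3 ->]]]; rewrite lee_fin; exact: h.
Qed.
Lemma AS_le (R : realType) (Sigma : eqType) (C : seq Sigma -> R) n m (c : R) :
  (forall T T', size T = n -> size T' = m -> ed T T' = 1%N -> (C T' - C T <= c)%R) ->
  AS C n m <= c%:E.
Proof.
move=> h; apply: ge_ereal_sup => _ [T [T' [h1 h2 h3 ->]]]; rewrite lee_fin; exact: h.
Qed.

Local Open Scope ring_scope.
Local Open Scope ereal_scope.

Theorem mainTheorem2 (R : realType) (Sigma : eqType) :
  ((forall n : nat, MS_sub (@delta Sigma R) n <= 2%:E) /\
  (forall n : nat, AS_sub (@delta Sigma R) n <= 1%:E)) /\
  ((forall n : nat, (0 < n)%N -> MS_ins (@delta Sigma R) n <= 2%:E) /\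
   (forall n : nat, AS_ins (@delta Sigma R) n <= 1%:E)) /\
  (limn_esup (fun n => MS_del (@delta Sigma R) n) <= (3 / 2)%:E /\
   limn_esup (fun n => AS_del (@delta Sigma R) n) <= 1%:E).
Proof.
have key : forall T T' : seq Sigma, ed T T' = 1%N -> exists u x y v,
  [/\ T = u ++ x ++ v, T' = u ++ y ++ v, (size x <= 1)%N & (size y <= 1)%N].
  by move=> T T' h; apply: ed1; rewrite h.
have hA : forall T T' : seq Sigma, ed T T' = 1%N -> (delta R T' - delta R T <= 1)%R.
  move=> T T' /key [u [x [y [v [-> -> _ hy]]]]].
  have := @delta_edit Sigma R u x y v hy; lra.
have hM2 : forall T T' : seq Sigma, ed T T' = 1%N -> (delta R T' / delta R T <= 2)%R.
  move=> T T' h; have hd := hA T T' h.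
  case: (eqVneq T [::]) => [->|hT]; first by rewrite delta_nil invr0 mulr0.
  have d1 := @delta_ge1 Sigma R T hT.
  rewrite ler_pdivrMr; lra.
have hM3 : forall T T' : seq Sigma, size T' = (size T).-1 -> ed T T' = 1%N ->
    (delta R T' / delta R T <= 3 / 2)%R.
  move=> T T' hs h.
  case: (eqVneq T [::]) => [->|hT]; first by rewrite delta_nil invr0 mulr0; lra.
  have d1 := @delta_ge1 Sigma R T hT.
  have hd := hA T T' h.
  case: T hT hs h d1 hd => [//|a T0] _ hs h d1 hd.
  case hall: (all (pred1 a) (a :: T0)).
  - move: h => /key [u [x [y [v [eT eT' hx hy]]]]].
    have y0 : y = [::].
      by apply: size0nil; move: hs hx hy; rewrite eT eT' !size_cat /=; lia.
    have hu : all (pred1 a) T'.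
      rewrite eT' y0 /=; move: hall; rewrite eT !all_cat => /andP[-> /andP[_ ->]].
      by [].
    have := @delta_unary Sigma R T' a hu.
    rewrite ler_pdivrMr; lra.
  - have : ~~ all (pred1 a) (a :: T0) by rewrite hall.
    case/allPn => b bT hb.
    have ab : a != b by rewrite eq_sym.
    have d2 := @delta_ge2 Sigma R (a :: T0) a b (mem_head a T0) bT ab.
    rewrite ler_pdivrMr; lra.
split; [split|split; [split|split]].
- by move=> n; apply: MS_le => T T' _ _; exact: hM2.
- by move=> n; apply: AS_le => T T' _ _; exact: hA.
- by move=> n _; apply: MS_le => T T' _ _; exact: hM2.
- by move=> n; apply: AS_le => T T' _ _; exact: hA.
- apply: limsup_le => n; apply: MS_le => T T' hT hT'; apply: hM3.
  by rewrite hT hT'.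
- by apply: limsup_le => n; apply: AS_le => T T' _ _; exact: hA.
Qed.
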